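(* Let $n\ge2$, $\lambda_0\in\mathbb D\setminus\{0\}$, $y^0=(y_1^0,\dots,y_{n-1}^0,q^0)\in\widetilde{\mathbb G}_n$, and $j\in\{1,\dots,[n/2]\}$. Suppose $y^0_jy^0_{n-j}\ne\binom nj^2q^0$, $|y^0_{n-j}|\le|y^0_j|$ and $\|\Phi_j(\cdot,y^0)\|_{H^\infty}\le|\lambda_0|$. Let $w_j\in\mathbb C$ satisfy $w_j^2=\frac{y^0_jy^0_{n-j}-\binom nj^2q^0}{\binom nj^2\lambda_0}$ and let $Z_j=\begin{bmatrix}\frac{y^0_j}{\binom nj\lambda_0}&w_j\\ w_j&\frac{y^0_{n-j}}{\binom nj}\end{bmatrix}$. Then $\|Z_j\|\le1$, and $\|Z_j\|=1$ if and only if $\|\Phi_j(\cdot,y^0)\|_{H^\infty}=|\lambda_0|$.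
   Context: $\mathbb D$ open unit disc, $\|\cdot\|$ operator norm. $\widetilde{\mathbb G}_n=\{(y_1,\dots,y_{n-1},q)\in\mathbb C^n: q\in\mathbb D,\ y_j=\beta_j+\bar\beta_{n-j}q$ with $\beta_j\in\mathbb C$, $|\beta_j|+|\beta_{n-j}|<\binom nj$, $j=1,\dots,n-1\}$. For $y=(y_1,\dots,y_{n-1},q)$, $z\in\mathbb C$: $\Phi_j(z,y)=\frac{\binom nj qz-y_j}{y_{n-j}z-\binom nj}$ if $y_{n-j}z\ne\binom nj$ and $y_jy_{n-j}\ne\binom nj^2q$, and $\Phi_j(z,y)=y_j/\binom nj$ if $y_jy_{n-j}=\binom nj^2q$; $\|\Phi_j(\cdot,y)\|_{H^\infty}=\sup_{z\in\mathbb D}|\Phi_j(z,y)|$. *)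

(* Defs.v *)
From Stdlib Require Import Reals.
From Coquelicot Require Import Coquelicot.

Open Scope C_scope.

Definition binC (n j : nat) : C := RtoC (Binomial.C n j).

(* A point (y_1,...,y_{n-1},q) of C^n is represented by y : nat -> C
   (only the values y 1, ..., y (n-1) matter) and q : C. *)
Definition in_Gtilde (n : nat) (y : nat -> C) (q : C) : Prop :=
  Cmod q < 1 /\
  exists beta : nat -> C,
    forall j : nat, (1 <= j <= n - 1)%nat ->
      y j = beta j + Cconj (beta (n - j)%nat) * q /\
      (Cmod (beta j) + Cmod (beta (n - j)%nat) < Binomial.C n j)%R.

Definition Phi (n j : nat) (y : nat -> C) (q : C) (z : C) : C :=
  (if (Ceq_dec (y j * y (n - j)%nat) (binC n j * binC n j * q))
     then y j / binC n j
     else (binC n j * q * z - y j) / (y (n - j)%nat * z - binC n j)).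

(* ||Phi_j(.,y)||_{H^infty} = sup_{z in D} |Phi_j(z,y)| (over points where Phi_j is defined) *)
Definition Phi_Hinf (n j : nat) (y : nat -> C) (q : C) : Rbar :=
  Lub_Rbar (fun x : R => exists z : C,
    Cmod z < 1 /\
    (y j * y (n - j)%nat = binC n j * binC n j * q \/ y (n - j)%nat * z <> binC n j) /\
    x = Cmod (Phi n j y q z)).

Definition norm2 (v1 v2 : C) : R := sqrt (Cmod v1 ^ 2 + Cmod v2 ^ 2).

Definition opnorm2 (a b c d : C) : Rbar :=
  Lub_Rbar (fun x : R => exists v1 v2 : C,
    (norm2 v1 v2 <= 1)%R /\ x = norm2 (a * v1 + b * v2) (c * v1 + d * v2)).

(* Main.v *)
Require Import Defs.
From Stdlib Require Import Reals Lra Psatz Lia Arith.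
From Coquelicot Require Import Coquelicot.

Section aux.
Local Open Scope R_scope.

Lemma psd2 (p s m x y : R): 0<=p -> 0<=s -> 0<=m -> m*m <= p*s -> 0<=x -> 0<=y ->
  2*m*x*y <= p*x*x + s*y*y.
Proof.
  intros.
  assert (H5: 0 <= p*x*x + s*y*y) by nra.
  assert (H6: (2*m*x*y)^2 <= (p*x*x + s*y*y)^2).
  { assert (0 <= (p*x*x - s*y*y)^2) by apply pow2_ge_0.
    assert (m*m*(x*x*(y*y)) <= p*s*(x*x*(y*y))) by (apply Rmult_le_compat_r; [apply Rmult_le_pos; nra|lra]).
    nra. }
  assert (0 <= 2*m*x*y) by (repeat apply Rmult_le_pos; lra).
  nra.
Qed.

Lemma lim1 (k0 k1 Y : R) : (forall r, 0 <= r < 1 -> 0 <= k0 + k1*r*r - 2*Y*r) ->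
  0 <= k0 + k1 - 2*Y.
Proof.
  intros H. destruct (Rle_lt_dec 0 (k0 + k1 - 2*Y)) as [h|h]; [exact h|].
  set (m := -(k0 + k1 - 2*Y)).
  set (K := Rabs Y + Rabs k1 + 1).
  assert (HK: 1 <= K) by (unfold K; pose proof (Rabs_pos Y); pose proof (Rabs_pos k1); lra).
  set (t := Rmin (1/2) (m / (8*K))).
  assert (Ht1: t <= 1/2) by apply Rmin_l.
  assert (Ht2: t <= m/(8*K)) by apply Rmin_r.
  assert (Ht0: 0 < t).
  { unfold t. apply Rmin_glb_lt. lra. apply Rdiv_lt_0_compat; unfold m; lra. }
  assert (HtK: t*K <= m/8).
  { apply (Rmult_le_compat_r K) in Ht2; [|lra]. unfold Rdiv in Ht2.
    replace (m * / (8*K) * K) with (m/8) in Ht2 by (field; lra). lra. }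
  specialize (H (1 - t) ltac:(lra)).
  assert (E: k0 + k1*(1-t)*(1-t) - 2*Y*(1-t) = -m + t*(2*Y - k1*(2-t))) by (unfold m; ring).
  rewrite E in H.
  assert (B: t*(2*Y - k1*(2-t)) <= t*(4*K)).
  { apply Rmult_le_compat_l; [lra|].
    pose proof (Rle_abs Y). pose proof (Rle_abs (-Y)). rewrite Rabs_Ropp in H1.
    pose proof (Rle_abs k1). pose proof (Rle_abs (-k1)). rewrite Rabs_Ropp in H3.
    unfold K. nra. }
  assert (0 < m) by (unfold m; lra). nra.
Qed.

Lemma core1 (a b e X Y : R) : 0<=a -> 0<=b -> 0<=e -> 0<=X -> 0<=Y -> b<1 -> b<=a -> a*a<=1 ->
  a*e - b <= Y -> Y*Y = X*X + (1-a*a)*(b*b-e*e) ->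
  (forall r, 0<=r<=1 -> 0 <= 1 - a*a + (b*b-e*e)*r*r - 2*Y*r) ->
  (X = 0 -> e*e = a*a*(b*b)) ->
  2*X <= 1 - a*a - b*b + e*e /\ e <= 1.
Proof.
  intros ha hb he hX hY hb1 hba ha1 hYe hid hh hX0.
  pose proof (hh 1 ltac:(lra)) as h1.
  replace (1 - a*a + (b*b-e*e)*1*1 - 2*Y*1) with (1 - a*a + b*b - e*e - 2*Y) in h1 by ring.
  assert (He1: a + e <= 1 + b).
  { assert ((a+e)*(a+e) <= (1+b)*(1+b)) by (clear -h1 hYe; nra). nra. }
  split; [|lra].
  set (u := 1 - a*a) in *. set (v := b*b - e*e) in *.
  assert (HT: v <= u).
  { destruct (Rle_lt_dec v u) as [h|h]; [exact h|exfalso].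
    assert (hv: 0 < v) by (unfold u in h; nra).
    assert (hr: 0 <= Y/v <= 1).
    { split. apply Rdiv_le_0_compat; lra.
      apply Rmult_le_reg_r with v; [lra|]. unfold Rdiv; rewrite Rmult_assoc, Rinv_l by lra. unfold u, v in *; lra. }
    specialize (hh _ hr).
    replace (u + v*(Y/v)*(Y/v) - 2*Y*(Y/v)) with (u - Y*Y/v) in hh
      by (field; lra).
    assert (Y*Y <= u*v).
    { assert (0 <= (u - Y*Y/v)*v) by (apply Rmult_le_pos; lra).
      replace ((u - Y*Y/v)*v) with (u*v - Y*Y) in H by (field; lra). lra. }
    assert (X*X <= 0) by (unfold u, v in *; lra).
    assert (X = 0) by nra.
    specialize (hX0 H1). unfold u, v in *. rewrite hX0 in h.
    assert (0 <= (1-a*a)*(1-b*b)) by (apply Rmult_le_pos; nra). lra. }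
  assert (h4: (u - v)*(u-v) >= 4*X*X) by (unfold u, v in *; nra).
  assert (h5: 0 <= u - v) by lra.
  unfold u, v in *. nra.
Qed.

Definition nsq (x : C) : R := fst x * fst x + snd x * snd x.

Ltac cexp := repeat match goal with | x : C |- _ => destruct x end;
  unfold nsq, Cminus, Cplus, Copp, Cmult, Cconj, RtoC; simpl; ring.

Lemma Cmod_sq x : Cmod x * Cmod x = nsq x.
Proof. unfold Cmod, nsq. rewrite sqrt_sqrt; [ring|nra]. Qed.
Lemma nsq_ge0 x : 0 <= nsq x. Proof. unfold nsq; nra. Qed.

Lemma Qexp (al de w v1 v2 : C) :
  nsq v1 + nsq v2 - nsq (al*v1 + w*v2)%C - nsq (w*v1 + de*v2)%C =
  (1 - nsq al - nsq w)*nsq v1 + (1 - nsq de - nsq w)*nsq v2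
   - 2*fst (Cconj v1 * (Cconj al * w + Cconj w * de) * v2)%C.
Proof. cexp. Qed.

Lemma detid (al de w : C) :
  (1 - nsq al - nsq w)*(1 - nsq de - nsq w) - nsq (Cconj al * w + Cconj w * de)%C
  = 1 - nsq al - nsq de - 2*nsq w + nsq (al*de - w*w)%C.
Proof. cexp. Qed.

Lemma Yid (al de w : C) :
  nsq (de - Cconj al * (al*de - w*w))%C = nsq w * nsq w + (1 - nsq al)*(nsq de - nsq (al*de - w*w)%C).
Proof. cexp. Qed.

Lemma hid (al de D z : C) :
  nsq (1 - de*z)%C - nsq (al - D*z)%C = 1 - nsq al + (nsq de - nsq D)*nsq z
     - 2*fst ((de - Cconj al * D)*z)%C.
Proof. cexp. Qed.

Lemma nsq_mult x y : nsq (x*y)%C = nsq x * nsq y.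
Proof. cexp. Qed.

Lemma Cmod_nsq x : Cmod x = sqrt (nsq x).
Proof. unfold Cmod, nsq. f_equal. ring. Qed.

Lemma sq_le_Cmod x y : Cmod x <= Cmod y -> nsq x <= nsq y.
Proof. intros H. rewrite <- !Cmod_sq. pose proof (Cmod_ge_0 x). nra. Qed.

Lemma dir0 (K : C) (r : R) : 0 <= r ->
  exists z : C, Cmod z = r /\ nsq z = r*r /\ fst (K*z)%C = Cmod K * r.
Proof.
  intros hr. assert (HK := Cmod_sq K). assert (HY := Cmod_ge_0 K).
  destruct K as [k1 k2]. revert HK HY. generalize (Cmod (k1,k2)). intros Y HK HY.
  unfold nsq in HK; simpl in HK.
  assert (E: forall z, Cmod z = sqrt (nsq z)) by apply Cmod_nsq.
  destruct (Req_EM_T Y 0) as [h0|h0].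
  - subst Y. assert (k1 = 0 /\ k2 = 0) as [-> ->] by nra.
    exists (r, 0). rewrite E. unfold nsq; simpl.
    replace (r*r+0*0) with (r*r) by ring. rewrite sqrt_square by lra. repeat split; ring.
  - assert (hY: 0 < Y) by lra.
    exists (r * k1 / Y, - (r * k2 / Y)). rewrite E. unfold nsq; simpl.
    assert (E1: r * k1 / Y * (r * k1 / Y) + - (r * k2 / Y) * - (r * k2 / Y) = r*r).
    { replace (r * k1 / Y * (r * k1 / Y) + - (r * k2 / Y) * - (r * k2 / Y))
        with (r*r * (k1*k1+k2*k2) / (Y*Y)) by (field; lra).
      rewrite <- HK. field; lra. }
    rewrite E1. rewrite sqrt_square by lra. split; [reflexivity|split; [reflexivity|]].
    replace (k1 * (r * k1 / Y) - k2 * - (r * k2 / Y)) with (r * (k1*k1+k2*k2) / Y) by (field; lra).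
    rewrite <- HK. field; lra.
Qed.

Lemma dir (al de D : C) (r : R) : 0 <= r ->
  exists z : C, Cmod z = r /\
   nsq (1 - de*z)%C - nsq (al - D*z)%C = 1 - Cmod al * Cmod al
     + (Cmod de * Cmod de - Cmod D * Cmod D)*r*r - 2*Cmod (de - Cconj al * D)%C * r.
Proof.
  intros hr. destruct (dir0 (de - Cconj al * D)%C r hr) as [z [h1 [h2 h3]]].
  exists z. split; [exact h1|]. rewrite hid, h2, h3, !Cmod_sq. ring.
Qed.

Lemma Qpsd (p s : R) (rho v1 v2 : C) : 0 <= p -> 0 <= s -> nsq rho <= p*s ->
  0 <= p*nsq v1 + s*nsq v2 - 2*fst (Cconj v1 * rho * v2)%C.
Proof.
  intros hp hs hr.
  assert (h1: fst (Cconj v1 * rho * v2)%C <= Cmod v1 * Cmod rho * Cmod v2).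
  { rewrite <- Cmod_conj with (c := v1). rewrite <- !Cmod_mult.
    pose proof (re_le_Cmod (Cconj v1 * rho * v2)%C). unfold Re in H.
    pose proof (Rle_abs (fst (Cconj v1 * rho * v2)%C)). lra. }
  pose proof (psd2 p s (Cmod rho) (Cmod v1) (Cmod v2) hp hs (Cmod_ge_0 _)
     ltac:(rewrite Cmod_sq; lra) (Cmod_ge_0 _) (Cmod_ge_0 _)).
  rewrite <- !Cmod_sq. lra.
Qed.

Lemma Zbound (al de w : C) (mu : R) :
  let p := 1 - nsq al - nsq w in let s := 1 - nsq de - nsq w in
  let rho := (Cconj al * w + Cconj w * de)%C in
  0 <= p - mu -> 0 <= s - mu -> nsq rho <= (p-mu)*(s-mu) ->
  forall v1 v2, nsq (al*v1 + w*v2)%C + nsq (w*v1 + de*v2)%C <= (1-mu)*(nsq v1 + nsq v2).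
Proof.
  intros p s rho h1 h2 h3 v1 v2.
  pose proof (Qpsd _ _ rho v1 v2 h1 h2 h3).
  pose proof (Qexp al de w v1 v2). fold p s rho in H0. lra.
Qed.

Lemma coreC (al de w D : C) : D = (al*de - w*w)%C ->
  Cmod de < 1 -> Cmod de <= Cmod al ->
  (forall z, Cmod z < 1 -> Cmod (al - D*z)%C <= Cmod (1 - de*z)%C) ->
  0 <= 1 - nsq al - nsq w /\ 0 <= 1 - nsq de - nsq w /\
  0 <= 1 - nsq al - nsq de - 2*nsq w + nsq D /\
  nsq (Cconj al * w + Cconj w * de)%C = (1 - nsq al - nsq w)*(1 - nsq de - nsq w)
      - (1 - nsq al - nsq de - 2*nsq w + nsq D) /\
  Cmod D <= 1 /\
  (1 - nsq al - nsq de - 2*nsq w + nsq D = 0 ->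
     1 - Cmod al*Cmod al + Cmod de*Cmod de - Cmod D*Cmod D = 2*Cmod (de - Cconj al * D)%C).
Proof.
  intros HD hb1 hba H.
  assert (hY: Cmod (de - Cconj al * D)%C * Cmod (de - Cconj al * D)%C
     = nsq w * nsq w + (1 - Cmod al * Cmod al)*(Cmod de * Cmod de - Cmod D * Cmod D)).
  { rewrite !Cmod_sq, HD. apply Yid. }
  assert (hYe: Cmod al * Cmod D - Cmod de <= Cmod (de - Cconj al * D)%C).
  { rewrite <- (Cmod_conj al), <- Cmod_mult.
    set (K := (de - Cconj al * D)%C).
    replace (Cconj al * D)%C with (de + - K)%C by (unfold K; ring).
    pose proof (Cmod_triangle de (- K)%C). rewrite Cmod_opp in H0. lra. }
  assert (hho: forall r, 0 <= r < 1 -> 0 <= 1 - Cmod al * Cmod al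
     + (Cmod de * Cmod de - Cmod D * Cmod D)*r*r - 2*Cmod (de - Cconj al * D)%C * r).
  { intros r hr. destruct (dir al de D r ltac:(lra)) as [z [hz hz2]].
    rewrite <- hz2. pose proof (H z ltac:(lra)) as Hz. apply sq_le_Cmod in Hz. lra. }
  pose proof (lim1 _ _ _ hho) as h1.
  assert (hhc: forall r, 0 <= r <= 1 -> 0 <= 1 - Cmod al * Cmod al
     + (Cmod de * Cmod de - Cmod D * Cmod D)*r*r - 2*Cmod (de - Cconj al * D)%C * r).
  { intros r hr. destruct (Req_dec r 1) as [->|hne]. lra. apply hho; lra. }
  assert (ha1: Cmod al * Cmod al <= 1).
  { specialize (hhc 0 ltac:(lra)). lra. }
  assert (hX0: nsq w = 0 -> Cmod D * Cmod D = Cmod al * Cmod al * (Cmod de * Cmod de)).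
  { intros h0. rewrite !Cmod_sq, HD. destruct w as [w1 w2]. unfold nsq in h0; simpl in h0.
    assert (w1 = 0 /\ w2 = 0) as [-> ->] by nra. cexp. }
  destruct (core1 (Cmod al) (Cmod de) (Cmod D) (nsq w) (Cmod (de - Cconj al * D)%C)
     (Cmod_ge_0 _) (Cmod_ge_0 _) (Cmod_ge_0 _) (nsq_ge0 _) (Cmod_ge_0 _) hb1 hba ha1 hYe hY hhc hX0)
    as [hT he].
  rewrite !Cmod_sq in hT.
  pose proof (detid al de w) as hdet. rewrite <- HD in hdet.
  pose proof (nsq_ge0 (Cconj al * w + Cconj w * de)%C).
  assert (hE: nsq D <= 1) by (rewrite <- Cmod_sq; pose proof (Cmod_ge_0 D); nra).
  assert (hps: 0 <= (1 - nsq al - nsq w) + (1 - nsq de - nsq w)) by lra.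
  assert (hp: 0 <= 1 - nsq al - nsq w /\ 0 <= 1 - nsq de - nsq w) by nra.
  split; [tauto|]. split; [tauto|]. split; [lra|]. split; [lra|]. split; [lra|].
  intros hd0.
  pose proof (Cmod_ge_0 (de - Cconj al * D)%C).
  set (Y := Cmod (de - Cconj al * D)%C) in *.
  rewrite !Cmod_sq in hY, h1 |- *.
  assert (hSS: (1 - nsq al + nsq de - nsq D - 2*Y)*(1 - nsq al + nsq de - nsq D + 2*Y) = 0).
  { assert (hw: nsq w = (1 - nsq al - nsq de + nsq D)/2) by lra.
    replace ((1 - nsq al + nsq de - nsq D - 2*Y)*(1 - nsq al + nsq de - nsq D + 2*Y))
      with ((1 - nsq al + nsq de - nsq D)*(1 - nsq al + nsq de - nsq D) - 4*(Y*Y)) by ring.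
    rewrite hY, hw. field. }
  apply Rmult_integral in hSS. lra.
Qed.

Lemma lub_le (E : R -> Prop) (m : R) : (forall x, E x -> x <= m) -> Rbar_le (Lub_Rbar E) m.
Proof. intros H. destruct (Lub_Rbar_correct E) as [_ Hl]. apply Hl. intros x Ex. simpl. auto. Qed.

Lemma lub_ge (E : R -> Prop) (x : R) : E x -> Rbar_le x (Lub_Rbar E).
Proof. intros H. destruct (Lub_Rbar_correct E) as [Hu _]. apply Hu. exact H. Qed.

Lemma lub_approx (E : R -> Prop) (m : R) :
  (forall eps, 0 < eps -> exists x, E x /\ m - eps < x) -> Rbar_le m (Lub_Rbar E).
Proof.
  intros H. destruct (Lub_Rbar_correct E) as [Hu _]. revert Hu.
  case (Lub_Rbar E).
  - intros l Hu. simpl. destruct (Rle_lt_dec m l) as [h|h]; [exact h|].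
    destruct (H (m - l) ltac:(lra)) as [x [Ex hx]]. specialize (Hu x Ex). simpl in Hu. lra.
  - intros; simpl; auto.
  - intros Hu. destruct (H 1 ltac:(lra)) as [x [Ex _]]. specialize (Hu x Ex). simpl in Hu. contradiction.
Qed.

Lemma norm2_nsq x y : norm2 x y = sqrt (nsq x + nsq y).
Proof. unfold norm2. rewrite <- !Cmod_sq. f_equal. ring. Qed.

Lemma op_le (al de w : C) (mu : R) : 0 <= mu <= 1 ->
  (forall v1 v2, nsq (al*v1 + w*v2)%C + nsq (w*v1 + de*v2)%C <= (1-mu)*(nsq v1 + nsq v2)) ->
  Rbar_le (opnorm2 al w w de) (sqrt (1-mu)).
Proof.
  intros hmu H. unfold opnorm2. apply lub_le. intros x [v1 [v2 [hv ->]]].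
  rewrite norm2_nsq in *. apply sqrt_le_1_alt.
  assert (hu: nsq v1 + nsq v2 <= 1).
  { pose proof (nsq_ge0 v1). pose proof (nsq_ge0 v2).
    rewrite <- (sqrt_sqrt (nsq v1 + nsq v2)) by lra.
    pose proof (sqrt_pos (nsq v1 + nsq v2)). nra. }
  specialize (H v1 v2). pose proof (nsq_ge0 v1). pose proof (nsq_ge0 v2). nra.
Qed.

Lemma kerid (rho : C) (p s k : R) :
  p * nsq (rho * RtoC k)%C + s * nsq (RtoC (p*k)) - 2 * fst (Cconj (rho * RtoC k) * rho * RtoC (p*k))%C
  = k*k*p*(p*s - nsq rho).
Proof. cexp. Qed.

Lemma op_ge1 (al de w : C) :
  0 <= 1 - nsq al - nsq w ->
  (1 - nsq al - nsq w)*(1 - nsq de - nsq w) - nsq (Cconj al * w + Cconj w * de)%C = 0 ->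
  Rbar_le 1 (opnorm2 al w w de).
Proof.
  intros hp hd. unfold opnorm2.
  set (p := 1 - nsq al - nsq w) in *. set (s := 1 - nsq de - nsq w) in *.
  set (rho := (Cconj al * w + Cconj w * de)%C) in *.
  destruct (Req_dec p 0) as [h0|h0].
  - apply lub_ge. exists 1%C, 0%C. rewrite !norm2_nsq.
    pose proof (Qexp al de w 1%C 0%C) as hq. fold p s rho in hq.
    assert (E1: nsq 1%C + nsq 0%C = 1) by (unfold nsq; simpl; ring).
    rewrite E1, sqrt_1. split; [lra|].
    replace (nsq (al * 1 + w * 0)%C + nsq (w * 1 + de * 0)%C) with 1.
    + now rewrite sqrt_1.
    + rewrite h0 in hq. replace (fst (Cconj 1 * rho * 0)%C) with 0 in hq by (simpl; ring).
      assert (E0: nsq 0%C = 0) by (unfold nsq; simpl; ring). assert (E2: nsq 1%C = 1) by (unfold nsq; simpl; ring). rewrite E0, E2 in hq. lra.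
  - assert (hp0: 0 < p) by lra.
    pose proof (nsq_ge0 rho).
    set (L := sqrt (nsq rho + p*p)).
    assert (hL: 0 < L) by (apply sqrt_lt_R0; nra).
    assert (hLL: L*L = nsq rho + p*p) by (apply sqrt_sqrt; nra).
    set (k := / L).
    apply lub_ge. exists (rho * RtoC k)%C, (RtoC (p*k)). rewrite !norm2_nsq.
    assert (E1: nsq (rho * RtoC k)%C + nsq (RtoC (p*k)) = 1).
    { rewrite nsq_mult. replace (nsq (RtoC k)) with (k*k) by (unfold nsq; simpl; ring).
      replace (nsq (RtoC (p*k))) with (p*k*(p*k)) by (unfold nsq; simpl; ring).
      unfold k. replace (nsq rho * (/ L * / L) + p * / L * (p * / L)) with ((nsq rho + p*p)/(L*L)) by (field; lra).
      rewrite hLL. field. nra. }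
    pose proof (Qexp al de w (rho * RtoC k)%C (RtoC (p*k))) as hq. fold p s rho in hq.
    rewrite kerid, hd, E1 in hq.
    rewrite E1, sqrt_1. split; [lra|].
    replace (nsq (al * (rho * RtoC k) + w * RtoC (p * k))%C + nsq (w * (rho * RtoC k) + de * RtoC (p * k))%C) with 1 by lra.
    now rewrite sqrt_1.
Qed.

Lemma approx (al de D : C) : Cmod de < 1 -> Cmod D <= 1 ->
  1 - Cmod al*Cmod al + Cmod de*Cmod de - Cmod D*Cmod D = 2*Cmod (de - Cconj al * D)%C ->
  forall eps, 0 < eps <= 1 ->
  exists z, Cmod z < 1 /\ (1 - eps) * Cmod (1 - de*z)%C < Cmod (al - D*z)%C.
Proof.
  intros hb he hS eps heps.
  set (b := Cmod de) in *. set (Y := Cmod (de - Cconj al * D)%C) in *.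
  assert (hb0: 0 <= b) by apply Cmod_ge_0. assert (hY: 0 <= Y) by apply Cmod_ge_0.
  assert (he0: 0 <= Cmod D) by apply Cmod_ge_0.
  set (C0 := 2*Y + 2).
  set (t := eps * ((1-b)*(1-b)) / (2*C0)).
  assert (ht0: 0 < t) by (unfold t, C0; apply Rdiv_lt_0_compat; [apply Rmult_lt_0_compat; [lra|apply Rmult_lt_0_compat; lra]|lra]).
  assert (ht1: t <= 1/4).
  { unfold t. apply Rmult_le_reg_r with (2*C0); [unfold C0; lra|].
    unfold Rdiv; rewrite Rmult_assoc, Rinv_l by (unfold C0; lra). unfold C0. nra. }
  destruct (dir al de D (1 - t) ltac:(lra)) as [z [hz hh]].
  fold b Y in hh.
  exists z. split; [lra|].
  assert (hh2: nsq (1 - de * z)%C - nsq (al - D * z)%C = t*(2*Y - (b*b - Cmod D*Cmod D)*(2-t))).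
  { rewrite hh. replace (1 - Cmod al * Cmod al) with (2*Y - b*b + Cmod D * Cmod D) by lra. ring. }
  assert (hbd: t*(2*Y - (b*b - Cmod D*Cmod D)*(2-t)) <= t*C0).
  { apply Rmult_le_compat_l; [lra|]. unfold C0.
    assert (0 <= b*b <= 1) by nra. assert (0 <= Cmod D * Cmod D <= 1) by nra. nra. }
  assert (hDn: 1 - b <= Cmod (1 - de*z)%C).
  { pose proof (Cmod_triangle (1 - de*z)%C (de*z)%C).
    replace (1 - de*z + de*z)%C with (RtoC 1) in H by ring. rewrite Cmod_1, Cmod_mult in H.
    fold b in H. rewrite hz in H. nra. }
  rewrite <- Cmod_sq, <- Cmod_sq in hh2.
  set (Dn := Cmod (1 - de*z)%C) in *. set (N := Cmod (al - D*z)%C) in *.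
  assert (hN: 0 <= N) by apply Cmod_ge_0.
  assert (htc: t * C0 = eps * ((1-b)*(1-b)) / 2) by (unfold t, C0; field; lra).
  assert (hsq: (1-eps)*Dn*((1-eps)*Dn) < N*N).
  { assert (h1: (1-b)*(1-b) <= Dn*Dn) by nra.
    assert (h2: N*N >= Dn*Dn*(1 - eps/2)) by nra.
    assert (h3: 0 < Dn*Dn) by nra.
    assert (h4: (1-eps)*(1-eps) < 1 - eps/2) by nra.
    nra. }
  assert (0 <= (1-eps)*Dn) by nra.
  nra.
Qed.
End aux.

Theorem mainTheorem14 (n j : nat) (lambda0 : C) (y0 : nat -> C) (q0 : C) (wj : C) :
  (2 <= n)%nat ->
  Cmod lambda0 < 1 -> lambda0 <> RtoC 0 ->
  in_Gtilde n y0 q0 ->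
  (1 <= j <= n / 2)%nat ->
  (y0 j * y0 (n - j)%nat <> binC n j * binC n j * q0)%C ->
  Cmod (y0 (n - j)%nat) <= Cmod (y0 j) ->
  Rbar_le (Phi_Hinf n j y0 q0) (Finite (Cmod lambda0)) ->
  (wj * wj = (y0 j * y0 (n - j)%nat - binC n j * binC n j * q0)
              / (binC n j * binC n j * lambda0))%C ->
  let Zj11 := (y0 j / (binC n j * lambda0))%C in
  let Zj22 := (y0 (n - j)%nat / binC n j)%C in
  Rbar_le (opnorm2 Zj11 wj wj Zj22) (Finite 1) /\
  (opnorm2 Zj11 wj wj Zj22 = Finite 1 <-> Phi_Hinf n j y0 q0 = Finite (Cmod lambda0)).
Proof.
  intros Hn Hl Hl0 HG Hj Hneq Hba Hsup Hw Zj11 Zj22.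
  set (c := Binomial.C n j).
  assert (hc: (0 < c)%R).
  { unfold c, Binomial.C. apply Rdiv_lt_0_compat; [apply lt_0_INR, lt_O_fact|
      apply Rmult_lt_0_compat; apply lt_0_INR, lt_O_fact]. }
  assert (hbin: binC n j = RtoC c) by reflexivity.
  assert (hjn: (1 <= j <= n - 1)%nat).
  { assert (n/2 < n)%nat by (apply Nat.div_lt; lia). lia. }
  assert (hac: (Cmod (y0 j) < c)%R).
  { destruct HG as [Hq [beta Hb]]. destruct (Hb j hjn) as [E1 E2]. rewrite E1.
    pose proof (Cmod_triangle (beta j) (Cconj (beta (n-j)%nat) * q0)%C) as H.
    rewrite Cmod_mult, Cmod_conj in H.
    pose proof (Cmod_ge_0 (beta (n-j)%nat)). pose proof (Cmod_ge_0 q0). fold c in E2. nra. }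
  assert (hlam: (0 < Cmod lambda0)%R) by (apply Cmod_gt_0; exact Hl0).
  assert (hcC: RtoC c <> 0%C).
  { intro h. apply (f_equal fst) in h. simpl in h. lra. }
  set (a := y0 j) in *. set (b := y0 (n-j)%nat) in *.
  set (al := (a / (RtoC c * lambda0))%C).
  set (de := (b / RtoC c)%C).
  set (D := (q0 / lambda0)%C).
  assert (HD: D = (al*de - wj*wj)%C).
  { rewrite hbin in Hw. unfold D, al, de. rewrite Hw. field. split; auto. }
  assert (hde: Cmod de = (Cmod b / c)%R).
  { unfold de. rewrite Cmod_div by exact hcC. rewrite Cmod_R, Rabs_pos_eq by lra. reflexivity. }
  assert (hal: Cmod al = (Cmod a / (c * Cmod lambda0))%R).
  { assert (hnz: (RtoC c * lambda0)%C <> 0%C).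
    { intro h. apply (f_equal Cmod) in h. rewrite Cmod_mult, Cmod_0, Cmod_R, Rabs_pos_eq in h by lra. nra. }
    unfold al. rewrite Cmod_div by exact hnz. rewrite Cmod_mult, Cmod_R, Rabs_pos_eq by lra. reflexivity. }
  assert (hb1: (Cmod de < 1)%R).
  { rewrite hde. apply Rmult_lt_reg_r with c; [lra|]. unfold Rdiv. rewrite Rmult_assoc, Rinv_l by lra. lra. }
  assert (hba': (Cmod de <= Cmod al)%R).
  { rewrite hde, hal. pose proof (Cmod_ge_0 a). pose proof (Cmod_ge_0 b).
    replace (Cmod a / (c * Cmod lambda0))%R with ((Cmod a / c) * / Cmod lambda0)%R by (field; lra).
    assert (h1: (Cmod b / c <= Cmod a / c)%R) by (unfold Rdiv; apply Rmult_le_compat_r; [left; apply Rinv_0_lt_compat; lra|lra]).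
    assert (h2: (1 <= / Cmod lambda0)%R).
    { rewrite <- Rinv_1. apply Rinv_le_contravar; lra. }
    assert (0 <= Cmod a / c)%R by (apply Rdiv_le_0_compat; lra). nra. }
  assert (hden: forall z, (Cmod z < 1)%R -> (b*z - RtoC c)%C <> 0%C /\ (1 - de*z)%C <> 0%C).
  { intros z hz. pose proof (Cmod_ge_0 z). pose proof (Cmod_ge_0 b). split.
    - intro h. assert (E: (b*z)%C = RtoC c) by (rewrite <- (Cplus_0_l (RtoC c)), <- h; ring).
      apply (f_equal Cmod) in E. rewrite Cmod_mult, Cmod_R, Rabs_pos_eq in E by lra. nra.
    - intro h. assert (E: (de*z)%C = RtoC 1).
      { replace (de*z)%C with (RtoC 1 - (1 - de*z))%C by ring. rewrite h. ring. }
      apply (f_equal Cmod) in E. rewrite Cmod_mult, Cmod_R, Rabs_pos_eq in E by lra.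
      pose proof (Cmod_ge_0 de). nra. }
  assert (hPhi: forall z, (Cmod z < 1)%R ->
     Cmod (Phi n j y0 q0 z) = (Cmod lambda0 * Cmod (al - D*z)%C / Cmod (1 - de*z)%C)%R).
  { intros z hz. destruct (hden z hz) as [h1 h2].
    assert (E: Phi n j y0 q0 z = (lambda0 * (al - D*z) / (1 - de*z))%C).
    { unfold Phi. destruct (Ceq_dec _ _) as [e|ne]; [exfalso; exact (Hneq e)|].
      rewrite hbin. fold a b. unfold al, D, de in *. field.
      split; [exact hcC|]. split; [exact Hl0|]. split; [|exact h1].
      intro h. apply h1. replace (b*z - RtoC c)%C with (- (RtoC c - b*z))%C by ring. rewrite h. ring. }
    rewrite E, Cmod_div, Cmod_mult by exact h2. reflexivity. }
  assert (hmem: forall z, (Cmod z < 1)%R ->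
     (fun x : R => exists z : C, (Cmod z < 1)%R /\
       ((y0 j * y0 (n - j)%nat)%C = (binC n j * binC n j * q0)%C \/
        (y0 (n - j)%nat * z)%C <> binC n j) /\ x = Cmod (Phi n j y0 q0 z)) (Cmod (Phi n j y0 q0 z))).
  { intros z hz. exists z. split; [exact hz|]. split; [|reflexivity]. right.
    rewrite hbin. intro h. apply (proj1 (hden z hz)). fold b in h. rewrite h. ring. }
  assert (Hcore: forall z, (Cmod z < 1)%R -> (Cmod (al - D*z)%C <= Cmod (1 - de*z)%C)%R).
  { intros z hz. pose proof (lub_ge _ _ (hmem z hz)) as h.
    pose proof (Rbar_le_trans _ _ _ h Hsup) as h'. simpl in h'. rewrite hPhi in h' by exact hz.
    assert (hDn: (0 < Cmod (1 - de*z)%C)%R) by (apply Cmod_gt_0; apply (proj2 (hden z hz))).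
    set (N := Cmod (al - D*z)%C) in *. set (Dn := Cmod (1 - de*z)%C) in *.
    apply Rmult_le_reg_l with (Cmod lambda0); [lra|].
    replace (Cmod lambda0 * N)%R with (Cmod lambda0 * N / Dn * Dn)%R by (field; lra).
    apply Rmult_le_compat_r; lra. }
  destruct (coreC al de wj D HD hb1 hba' Hcore) as [hp [hs [hdet [hrho [he hS]]]]].
  change Zj11 with al. change Zj22 with de.
  set (p := (1 - nsq al - nsq wj)%R) in *. set (s := (1 - nsq de - nsq wj)%R) in *.
  set (rho := (Cconj al * wj + Cconj wj * de)%C) in *.
  set (det := (1 - nsq al - nsq de - 2 * nsq wj + nsq D)%R) in *.
  pose proof (nsq_ge0 rho) as hrho0.
  assert (Part1: Rbar_le (opnorm2 al wj wj de) (Finite 1)).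
  { replace 1%R with (sqrt (1 - 0)) by (rewrite Rminus_0_r; apply sqrt_1).
    apply op_le; [lra|]. apply (Zbound al de wj 0); fold p s rho; nra. }
  assert (Hpos: (0 < det)%R -> Rbar_le (opnorm2 al wj wj de) (Finite (sqrt (1 - det/(p+s)))) /\
      Rbar_le (Phi_Hinf n j y0 q0) (Finite (Cmod lambda0 * sqrt (1 - det/(p+s)))) /\
      (sqrt (1 - det/(p+s)) < 1)%R).
  { intros hd.
    assert (hps: (0 < p + s)%R) by nra.
    set (mu := (det / (p+s))%R).
    assert (hmu: (mu * (p+s) = det)%R) by (unfold mu; field; lra).
    assert (hmu0: (0 < mu)%R) by (unfold mu; apply Rdiv_lt_0_compat; lra).
    assert (hmup: (mu <= p)%R) by nra.
    assert (hmus: (mu <= s)%R) by nra.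
    assert (hmu1: (mu <= 1)%R) by (unfold p in hmup; pose proof (nsq_ge0 al); pose proof (nsq_ge0 wj); lra).
    assert (hmr: (nsq rho <= (p - mu)*(s - mu))%R) by nra.
    pose proof (Zbound al de wj mu ltac:(fold p; lra) ltac:(fold s; lra) ltac:(fold p s rho; lra)) as hZ.
    split; [|split].
    - apply op_le; [lra|exact hZ].
    - unfold Phi_Hinf. apply lub_le. intros x [z [hz [_ ->]]].
      rewrite hPhi by exact hz.
      specialize (hZ (1 - de*z)%C (z*wj)%C).
      replace (al * (1 - de * z) + wj * (z * wj))%C with (al - D*z)%C in hZ by (rewrite HD; ring).
      replace (wj * (1 - de * z) + de * (z * wj))%C with wj in hZ by ring.
      rewrite nsq_mult in hZ.
      assert (hz2: (nsq z <= 1)%R) by (rewrite <- Cmod_sq; pose proof (Cmod_ge_0 z); nra).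
      pose proof (nsq_ge0 wj). pose proof (nsq_ge0 (1 - de*z)%C).
      assert (h5: ((1-mu)*nsq z <= 1)%R) by (pose proof (nsq_ge0 z); nra).
      assert (h6: ((1-mu)*(nsq z * nsq wj) <= nsq wj)%R).
      { replace ((1-mu)*(nsq z * nsq wj))%R with (((1-mu)*nsq z) * nsq wj)%R by ring.
        rewrite <- (Rmult_1_l (nsq wj)) at 2. apply Rmult_le_compat_r; lra. }
      assert (hN: (nsq (al - D*z)%C <= (1-mu) * nsq (1 - de*z)%C)%R) by lra.
      assert (hDn: (0 < Cmod (1 - de*z)%C)%R) by (apply Cmod_gt_0; apply (proj2 (hden z hz))).
      assert (hN2: (Cmod (al - D*z)%C <= sqrt (1-mu) * Cmod (1 - de*z)%C)%R).
      { rewrite !Cmod_nsq, <- sqrt_mult by lra. apply sqrt_le_1_alt. exact hN. }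
      apply Rmult_le_reg_r with (Cmod (1 - de*z)%C); [lra|].
      replace (Cmod lambda0 * Cmod (al - D * z)%C / Cmod (1 - de * z)%C * Cmod (1 - de * z)%C)%R
        with (Cmod lambda0 * Cmod (al - D * z)%C)%R by (field; lra).
      rewrite Rmult_assoc. apply Rmult_le_compat_l; lra.
    - rewrite <- sqrt_1 at 2. apply sqrt_lt_1_alt. lra. }
  split; [exact Part1|].
  assert (Hdet0: det = 0%R \/ (0 < det)%R) by lra.
  split.
  - intros Hop. destruct Hdet0 as [hd0|hd].
    +
      apply Rbar_le_antisym; [exact Hsup|].
      unfold Phi_Hinf. apply lub_approx. intros eps heps.
      set (ep := Rmin (eps / Cmod lambda0) 1).
      assert (hep: (0 < ep <= 1)%R).
      { split; [apply Rmin_glb_lt; [apply Rdiv_lt_0_compat; lra|lra]|apply Rmin_r]. }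
      assert (hep2: (ep <= eps / Cmod lambda0)%R) by apply Rmin_l.
      destruct (approx al de D hb1 he (hS hd0) ep hep) as [z [hz hlt]].
      exists (Cmod (Phi n j y0 q0 z)). split; [exact (hmem z hz)|].
      rewrite hPhi by exact hz.
      assert (hDn: (0 < Cmod (1 - de*z)%C)%R) by (apply Cmod_gt_0; apply (proj2 (hden z hz))).
      assert (h1: ((1 - ep) < Cmod (al - D*z)%C / Cmod (1 - de*z)%C)%R).
      { apply Rmult_lt_reg_r with (Cmod (1 - de*z)%C); [lra|].
        replace (Cmod (al - D*z)%C / Cmod (1 - de*z)%C * Cmod (1 - de*z)%C)%R
          with (Cmod (al - D*z)%C) by (field; lra). lra. }
      assert (h3: (eps >= ep * Cmod lambda0)%R).
      { apply Rmult_le_compat_r with (r := Cmod lambda0) in hep2; [|lra].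
        replace (eps / Cmod lambda0 * Cmod lambda0)%R with eps in hep2 by (field; lra). lra. }
      replace (Cmod lambda0 * Cmod (al - D * z)%C / Cmod (1 - de * z)%C)%R
        with (Cmod lambda0 * (Cmod (al - D * z)%C / Cmod (1 - de * z)%C))%R by (field; lra).
      nra.
    + exfalso. destruct (Hpos hd) as [h1 [_ h3]]. rewrite Hop in h1. simpl in h1. lra.
  - intros Hph. destruct Hdet0 as [hd0|hd].
    + apply Rbar_le_antisym; [exact Part1|].
      apply op_ge1; [exact hp|]. fold p s rho. lra.
    + exfalso. destruct (Hpos hd) as [_ [h2 h3]]. rewrite Hph in h2. simpl in h2.
      nra.
Qed.
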